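(* Let $A^1,A^2,A^3$ be three disjoint cubic graphs with $v(A^i)\equiv 0\pmod 6$ for each $i$, let $a^i\in V(A^i)$ with $N(a^i,A^i)=\{a^i_1,a^i_2,a^i_3\}$, and let $G=Y(A^1,a^1;A^2,a^2;A^3,a^3)$. Let $P$ be a $\Lambda$-factor of $G$. For $i\in\{1,2,3\}$ let $D^i$ be the set of edges of $G$ with exactly one end in $V(A^i-a^i)$ (i.e. $D^i=\{a^i_jz_j: j\in\{1,2,3\}\}$), and let $P^i$ be the union of the components of $P$ that contain an edge of $D^i$. Then the number of components of $P^i$ is $1$ or $2$, for every $i\in\{1,2,3\}$.
   Context: Graphs are finite, undirected, without loops or multiple edges; $v(G)=|V(G)|$; $N(x,G)$ is the set of neighbours of $x$. The graph $Y(A^1,a^1;A^2,a^2;A^3,a^3)$ is obtained from $(A^1-a^1)\cup(A^2-a^2)\cup(A^3-a^3)$ by adding three new vertices $z_1,z_2,z_3$ and the nine new edges $z_ja^i_j$, $i,j\in\{1,2,3\}$. A $\Lambda$-factor of $G$ is a spanning subgraph each of whose components is a path on 3 vertices. *)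

(* Defs.v *)
From mathcomp Require Import all_boot.
Set Implicit Arguments.
Unset Strict Implicit.
Unset Printing Implicit Defensive.

Definition simple_graph (T : finType) (e : rel T) : Prop :=
  symmetric e /\ irreflexive e.

Definition nbhd (T : finType) (e : rel T) (x : T) : {set T} := [set y | e x y].

Definition cubic (T : finType) (e : rel T) : Prop :=
  forall x : T, #|nbhd e x| = 3.

Section YConstruction.
(* The three (disjoint) graphs A^1, A^2, A^3 are indexed by 'I_3; they are
   automatically disjoint since they live on distinct types. *)
Variable T : 'I_3 -> finType.
Variable e : forall i, rel (T i).
Variable a : forall i, T i.
(* nb i j is the neighbour a^i_j of a^i (j : 'I_3 stands for j = 1,2,3). *)
Variable nb : forall i, 'I_3 -> T i.

(* Vertex set of Y(A^1,a^1;A^2,a^2;A^3,a^3):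
   inl <i, x> is the vertex x of A^i - a^i, inr j is the new vertex z_j. *)
Definition YV : finType :=
  ({i : 'I_3 & {x : T i | x != a i}} + 'I_3)%type.

Definition Yedge : rel YV := fun u v =>
  match u, v with
  | inl s, inl t => (tag s == tag t) && e (val (tagged s)) (val (tagged_as s t))
  | inl s, inr j => val (tagged s) == nb (tag s) j
  | inr j, inl s => val (tagged s) == nb (tag s) j
  | inr _, inr _ => false
  end.

Definition in_side (i : 'I_3) (u : YV) : bool :=
  if u is inl s then tag s == i else false.

Definition Dedge (i : 'I_3) : rel YV := fun u v =>
  Yedge u v && (in_side i u != in_side i v).
End YConstruction.

Definition component (T : finType) (P : rel T) (v : T) : {set T} :=
  [set w | connect P v w].

Definition Lambda_factor (T : finType) (E P : rel T) : Prop :=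
  [/\ symmetric P, subrel P E &
      forall v : T, exists x y z : T,
        [/\ uniq [:: x; y; z], component P v = [set x; y; z],
            P x y, P y z & ~~ P x z]].

(* The set of components of P that contain an edge of D (so #|..| is the
   number of components of the union P^D of these components). *)
Definition comps_meeting (T : finType) (P D : rel T) : {set {set T}} :=
  [set component P u | u in [pred u | [exists v, P u v && D u v]]].

(* Main.v *)
Require Import Defs.
From mathcomp Require Import all_boot zify.

Section Comp.
Variables (V : finType) (P : rel V).
Hypothesis Psym : symmetric P.
Hypothesis H3 : forall v, #|component P v| = 3.

Lemma comp_refl v : v \in component P v.
Proof. by rewrite inE connect0. Qed.

Lemma comp_eq u v : v \in component P u -> component P u = component P v.
Proof.
rewrite inE => Huv; apply/setP => w; rewrite !inE.
have cs := sym_connect_sym Psym.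
apply/idP/idP => H.
- by apply: connect_trans H; rewrite cs.
- exact: connect_trans Huv H.
Qed.

Lemma comp_closed_card (X : {set V}) :
  (forall v, v \in X -> component P v \subset X) -> 3 %| #|X|.
Proof.
move=> HC; have := leqnn #|X|; move: {2}#|X| => n Hn.
elim: n X Hn HC => [|N IH] X Hn HC.
- by move: Hn; rewrite leqn0 => /eqP ->.
case: (set_0Vmem X) => [->|[v Hv]]; first by rewrite cards0.
set X' := X :\: component P v.
have Hsub : component P v \subset X by exact: HC.
have HX' : #|X'| = #|X| - 3 by rewrite cardsD (setIidPr Hsub) H3.
have Hge : 3 <= #|X| by rewrite -(H3 v) subset_leq_card.
have : 3 %| #|X'|.
  apply: IH; first by lia.
  move=> w; rewrite inE => /andP [Hw HwX].
  apply/subsetP => y Hy; rewrite inE; apply/andP; split; last first.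
    by move/subsetP: (HC w HwX); apply.
  apply/negP => Hyv; move/negP: Hw; apply.
  have e1 := comp_eq _ _ Hy; have e2 := comp_eq _ _ Hyv.
  by rewrite e2 -e1 comp_refl.
rewrite HX' => Hd.
have -> : #|X| = (#|X| - 3) + 3 by lia.
by rewrite dvdn_addl.
Qed.

Lemma comp_sub_closed (a : pred V) v :
  (forall x y, P x y -> a x = a y) -> a v -> component P v \subset [set x | a x].
Proof.
move=> Ha Hv; apply/subsetP => w; rewrite !inE => Hc.
have := closed_connect (a:=a) Ha Hc; rewrite !unfold_in /= => <-; exact Hv.
Qed.
End Comp.
Arguments comp_refl {V P} v.
Arguments comp_eq {V P} Psym {u v}.
Arguments comp_closed_card {V P} Psym H3 X.
Arguments comp_sub_closed {V P} a {v}.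

Lemma card_sum (V : finType) (X : {set V}) : #|X| = \sum_(u : V) (u \in X).
Proof. rewrite -sum1_card big_mkcond; apply: eq_bigr => u _; by case: (u \in X). Qed.

Lemma card_bigcup_le (V : finType) n (F : 'I_n -> {set V}) :
  #|\bigcup_(j < n) F j| <= \sum_(j < n) #|F j|.
Proof.
elim: n F => [|n IH] F; first by rewrite big_ord0 cards0.
rewrite big_ord_recr /= big_ord_recr /=.
apply: leq_trans (leq_card_setU _ _) _.
by rewrite leq_add2r.
Qed.

Lemma card3 (V : finType) (x y z : V) : uniq [:: x; y; z] -> #|[set x; y; z]| = 3.
Proof.
move=> Hu; rewrite -[3]/(size [:: x; y; z]) -(card_uniqP Hu); apply: eq_card => w; rewrite !inE.
by rewrite orbA.
Qed.

Theorem mainTheorem7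
  (T : 'I_3 -> finType) (e : forall i, rel (T i))
  (a : forall i, T i) (nb : forall i, 'I_3 -> T i)
  (Hsimple : forall i, simple_graph (e i))
  (Hcubic : forall i, cubic (e i))
  (Hmod6 : forall i, #|T i| %% 6 = 0)
  (Hnb : forall i, nbhd (e i) (a i) = [set nb i j | j : 'I_3])
  (P : rel (YV a))
  (HP : Lambda_factor (Yedge e nb) P) :
  forall i : 'I_3,
    #|comps_meeting P (Dedge e nb i)| = 1 \/
    #|comps_meeting P (Dedge e nb i)| = 2.
Proof.
move=> i.
have [Psym Psub Hcomp] := HP.
have H3 : forall v, #|component P v| = 3.
  by move=> v; have [x [y [z [Hu -> _ _ _]]]] := Hcomp v; apply: card3.
pose S m := [set u : YV a | in_side m u].
pose W := \bigcup_(j < 3) component P (inr j).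
have HW1 : forall j, inr j \in W.
  by move=> j; apply/bigcupP; exists j => //; apply: comp_refl.
have HWc : forall v, v \in W -> component P v \subset W.
  move=> v /bigcupP [j _ Hj]; rewrite -(comp_eq Psym Hj).
  by apply/subsetP => w Hw; apply/bigcupP; exists j.
have HWP : forall x y, P x y -> (x \in W) = (y \in W).
  have H1 : forall x y, P x y -> x \in W -> y \in W.
    move=> x y Pxy Hx; apply: (subsetP (HWc x Hx)).
    by rewrite inE connect1.
  move=> x y Pxy; apply/idP/idP; first exact: H1.
  by apply: H1; rewrite Psym.
have HSm : forall m, #|S m| = #|T m| - 1.
  move=> m.
  pose f := fun x : {x : T m | x != a m} =>
    (inl (Tagged (fun k => {x : T k | x != a k}) x) : YV a).
  have -> : S m = f @: setT.
    apply/setP => u; rewrite inE; apply/idP/imsetP.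
    - by case: u => [[k x]|j] //= /eqP Hk; subst k; exists x.
    - by case=> x _ ->; rewrite /= eqxx.
  rewrite card_imset; last first.
    move=> x y /= [] /(congr1 (tagged_as (Tagged (fun k => {x : T k | x != a k}) x))).
    by rewrite !tagged_asE.
  rewrite cardsT card_sig subn1 -(cardC1 (a m)).
  by apply: eq_card => x; rewrite !inE.
have HSmod : forall m, #|S m| %% 3 = 2.
  move=> m; rewrite HSm; have := Hmod6 m.
  have : 0 < #|T m| by apply/card_gt0P; exists (a m).
  lia.
have HS3 : forall m, 3 %| #|S m :\: W|.
  move=> m; apply: (comp_closed_card Psym H3) => v Hv.
  apply: subset_trans (comp_sub_closed (fun x => x \in S m :\: W) _ Hv) _.
    move=> x y Pxy; rewrite !inE (HWP _ _ Pxy).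
    case HyW: (y \in W) => //=.
    have HxW : x \notin W by rewrite (HWP _ _ Pxy) HyW.
    move: (Psub _ _ Pxy) HxW HyW; clear Pxy.
    case: x => [s|j]; last by rewrite HW1.
    case: y => [t|k]; last by rewrite HW1.
    by rewrite /= => /andP [/eqP Hst _] _ _; rewrite Hst.
  by apply/subsetP => x; rewrite inE.
have HSW : forall m, 2 <= #|S m :&: W|.
  move=> m; have := cardsID W (S m); have := HS3 m; have := HSmod m; lia.
have HWle : #|W| <= 9.
  apply: leq_trans (@card_bigcup_le _ _ (fun j : 'I_3 => component P (inr j : YV a))) _.
  by rewrite (eq_bigr (fun _ => 3)) ?sum_nat_const ?card_ord // => j _; rewrite H3.
have HWsum : #|W| = 3 + \sum_(m < 3) #|S m :&: W|.
  rewrite card_sum big_sumType /= addnC.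
  congr (_ + _).
    rewrite (eq_bigr (fun _ => 1)); last by move=> j _; rewrite HW1.
    by rewrite sum_nat_const card_ord.
  rewrite (partition_big (fun s => tag s) xpredT) //.
  apply: eq_bigr => m _.
  rewrite [RHS]card_sum big_sumType /= [X in _ = _ + X]big1 ?addn0; last by move=> j _; rewrite !inE.
  rewrite [LHS]big_mkcond /=.
  apply: eq_bigr => s _; rewrite !inE /=.
  by case: (tag s == m).
have HSi : #|S i :&: W| <= 2.
  have H4 : 4 <= \sum_(m < 3 | m != i) #|S m :&: W|.
    apply: (@leq_trans (\sum_(m < 3 | m != i) 2)); last first.
      by apply: leq_sum => m _; apply: HSW.
    by rewrite sum_nat_const cardC1 card_ord.
  move: HWle H4; rewrite HWsum (bigD1 i) //=; set X := \sum_(_ < 3 | _) _; lia.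
have Hsub : comps_meeting P (Dedge e nb i) \subset [set component P u | u in S i :&: W].
  apply/subsetP => C /imsetP [u Hu ->].
  move: Hu; rewrite inE => /existsP [v /andP [Puv Duv]].
  have Hv : v \in component P u by rewrite inE connect1.
  move: Duv; rewrite /Dedge => /andP [Y Hd].
  have HuW : u \in W.
    move: Puv Hv Y Hd; case: u => [s|j]; last by rewrite HW1.
    case: v => [t|k] Puv; last by rewrite (HWP _ _ Puv) HW1.
    by move=> _ /= /andP [/eqP Hst _]; rewrite Hst eqxx.
  have HvW : v \in W by rewrite -(HWP _ _ Puv).
  case Hiu: (in_side i u).
    by apply/imsetP; exists u => //; rewrite !inE Hiu HuW.
  rewrite Hiu /= in Hd.
  apply/imsetP; exists v; last by rewrite (comp_eq Psym Hv).
  have Hiv : in_side i v by move: Hd; case: (in_side i v).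
  by rewrite !inE Hiv HvW.
have Hne : comps_meeting P (Dedge e nb i) != set0.
  apply/negP => /eqP H0.
  have : 3 %| #|S i|.
    apply: (comp_closed_card Psym H3) => v Hv.
    apply: subset_trans (comp_sub_closed (fun x => x \in S i) _ Hv) _; last first.
      by apply/subsetP => x; rewrite inE.
    move=> x y Pxy; rewrite !inE.
    case E: (in_side i x == in_side i y); first by apply/eqP.
    exfalso.
    have : component P x \in comps_meeting P (Dedge e nb i).
      apply/imsetP; exists x => //; rewrite inE; apply/existsP; exists y.
      by rewrite Pxy /Dedge (Psub _ _ Pxy) E.
    by rewrite H0 inE.
  have := HSmod i; lia.
have := leq_trans (subset_leq_card Hsub) (leq_imset_card _ _).
rewrite -card_gt0 in Hne.
lia.
Qed.
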